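(* Let $X$ be a uniformly convex Banach space and $Y$ any Banach space. Then the pair $(X,Y)$ has the sBPBp for compact operators: for every $\varepsilon>0$ and every compact operator $T\in\mathcal{L}(X,Y)$ with $\|T\|=1$ there exists $\eta=\eta(\varepsilon,T)>0$ such that whenever $x_0\in S_X$ satisfies $\|T(x_0)\|>1-\eta$, there exists $x_1\in S_X$ with $\|T(x_1)\|=1$ and $\|x_1-x_0\|<\varepsilon$.
   Context: All Banach spaces are over $\mathbb{K}=\mathbb{R}$ or $\mathbb{C}$. $S_X$ denotes the unit sphere of $X$ and $\mathcal{L}(X,Y)$ the space of bounded linear operators from $X$ to $Y$ with the operator norm. An operator is compact if the closure of the image of the unit ball is compact. *)

(* Defs.v *)
From Stdlib Require Import Reals Lra List.
Open Scope R_scope.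

Record NormedSpace := {
  carrier :> Type;
  vzero : carrier;
  vadd : carrier -> carrier -> carrier;
  vopp : carrier -> carrier;
  vscal : R -> carrier -> carrier;
  vnorm : carrier -> R;
  vadd_assoc : forall x y z, vadd x (vadd y z) = vadd (vadd x y) z;
  vadd_comm : forall x y, vadd x y = vadd y x;
  vadd_0 : forall x, vadd x vzero = x;
  vadd_opp : forall x, vadd x (vopp x) = vzero;
  vscal_assoc : forall a b x, vscal a (vscal b x) = vscal (a * b) x;
  vscal_1 : forall x, vscal 1 x = x;
  vscal_distr_l : forall a x y, vscal a (vadd x y) = vadd (vscal a x) (vscal a y);
  vscal_distr_r : forall a b x, vscal (a + b) x = vadd (vscal a x) (vscal b x);
  vnorm_nonneg : forall x, 0 <= vnorm x;
  vnorm_eq0 : forall x, vnorm x = 0 -> x = vzero;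
  vnorm_triangle : forall x y, vnorm (vadd x y) <= vnorm x + vnorm y;
  vnorm_scal : forall a x, vnorm (vscal a x) = Rabs a * vnorm x
}.

Arguments vzero {n}.
Arguments vadd {n}.
Arguments vopp {n}.
Arguments vscal {n}.
Arguments vnorm {n}.

Definition vsub {X : NormedSpace} (x y : X) : X := vadd x (vopp y).

Definition complete (X : NormedSpace) : Prop :=
  forall u : nat -> X,
    (forall eps, 0 < eps -> exists N, forall m n, (N <= m)%nat -> (N <= n)%nat ->
        vnorm (vsub (u m) (u n)) < eps) ->
    exists l : X, forall eps, 0 < eps -> exists N, forall n, (N <= n)%nat ->
        vnorm (vsub (u n) l) < eps.

Definition Banach (X : NormedSpace) : Prop := complete X.

Definition uniformly_convex (X : NormedSpace) : Prop :=
  forall eps, 0 < eps -> exists delta, 0 < delta /\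
    forall x y : X, vnorm x <= 1 -> vnorm y <= 1 -> eps <= vnorm (vsub x y) ->
      vnorm (vscal (1/2) (vadd x y)) <= 1 - delta.

Definition linear_map {X Y : NormedSpace} (T : X -> Y) : Prop :=
  (forall x y, T (vadd x y) = vadd (T x) (T y)) /\
  (forall a x, T (vscal a x) = vscal a (T x)).

Definition bounded_linear {X Y : NormedSpace} (T : X -> Y) : Prop :=
  linear_map T /\ exists M, forall x, vnorm (T x) <= M * vnorm x.

Definition op_norm_is {X Y : NormedSpace} (T : X -> Y) (c : R) : Prop :=
  is_lub (fun r => exists x : X, vnorm x <= 1 /\ r = vnorm (T x)) c.

Definition open_set {Y : NormedSpace} (U : Y -> Prop) : Prop :=
  forall y, U y -> exists r, 0 < r /\ forall z, vnorm (vsub z y) < r -> U z.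

Definition closure {Y : NormedSpace} (A : Y -> Prop) : Y -> Prop :=
  fun y => forall r, 0 < r -> exists a, A a /\ vnorm (vsub y a) < r.

Definition compact_set {Y : NormedSpace} (K : Y -> Prop) : Prop :=
  forall (I : Type) (U : I -> Y -> Prop),
    (forall i, open_set (U i)) ->
    (forall y, K y -> exists i, U i y) ->
    exists l : list I, forall y, K y -> exists i, In i l /\ U i y.

Definition compact_operator {X Y : NormedSpace} (T : X -> Y) : Prop :=
  bounded_linear T /\
  compact_set (closure (fun y : Y => exists x : X, vnorm x <= 1 /\ y = T x)).

(* Main.v *)
Require Import Defs.
From Stdlib Require Import Reals.
From Stdlib Require Import Lra Lia List Classical ClassicalEpsilon.
Open Scope R_scope.

Section Vec.
Variable X : NormedSpace.
Implicit Types x y z a b c : X.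

Lemma vadd_cancel a b c : vadd a b = vadd a c -> b = c.
Proof.
  intro H.
  assert (E: forall d, d = vadd (vopp a) (vadd a d)).
  { intro d. rewrite vadd_assoc, (vadd_comm X (vopp a) a), vadd_opp, vadd_comm, vadd_0. reflexivity. }
  rewrite (E b), (E c), H. reflexivity.
Qed.

Lemma vscal0 x : vscal 0 x = vzero.
Proof.
  apply (vadd_cancel (vscal 0 x)). rewrite vadd_0, <- vscal_distr_r. f_equal; ring.
Qed.

Lemma vnorm0 : vnorm (@vzero X) = 0.
Proof. rewrite <- (vscal0 vzero), vnorm_scal, Rabs_R0. ring. Qed.

Lemma vopp_scal x : vopp x = vscal (-1) x.
Proof.
  apply (vadd_cancel x). rewrite vadd_opp. rewrite <- (vscal_1 X x) at 1.
  rewrite <- vscal_distr_r. replace (1 + -1) with 0 by ring. now rewrite vscal0.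
Qed.

Lemma vnorm_opp x : vnorm (vopp x) = vnorm x.
Proof. rewrite vopp_scal, vnorm_scal. replace (Rabs (-1)) with 1. ring. rewrite Rabs_left; lra. Qed.

Lemma vsub_chain a b c : vsub a c = vadd (vsub a b) (vsub b c).
Proof.
  unfold vsub. rewrite <- vadd_assoc, (vadd_assoc X (vopp b)), (vadd_comm X (vopp b) b),
    vadd_opp, (vadd_comm X vzero), (vadd_comm X (vopp c)), vadd_assoc, vadd_0. reflexivity.
Qed.

Lemma vsub_tri a b c : vnorm (vsub a c) <= vnorm (vsub a b) + vnorm (vsub b c).
Proof. rewrite (vsub_chain a b c). apply vnorm_triangle. Qed.

Lemma vsub_sym a b : vnorm (vsub a b) = vnorm (vsub b a).
Proof.
  rewrite <- vnorm_opp. f_equal. unfold vsub. rewrite !vopp_scal, vscal_distr_l, vscal_assoc.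
  replace (-1 * -1) with 1 by ring. rewrite vscal_1, vadd_comm. reflexivity.
Qed.

Lemma vsub_self a : vsub a a = vzero.
Proof. apply vadd_opp. Qed.

Lemma vsub_eq0 a b : vnorm (vsub a b) = 0 -> a = b.
Proof.
  intro H. apply vnorm_eq0 in H. unfold vsub in H.
  apply (vadd_cancel (vopp b)). rewrite (vadd_comm X (vopp b) b), vadd_opp, vadd_comm. exact H.
Qed.

Lemma vnorm_rev a b : vnorm a - vnorm b <= vnorm (vsub a b).
Proof.
  assert (vnorm a <= vnorm (vsub a b) + vnorm b); [|lra].
  replace a with (vadd (vsub a b) b) at 1. apply vnorm_triangle.
  unfold vsub. rewrite <- vadd_assoc, (vadd_comm X (vopp b)), vadd_opp, vadd_0. reflexivity.
Qed.

Lemma mid_bound a b : 2 * vnorm a <= vnorm (vadd a b) + vnorm (vsub a b).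
Proof.
  assert (E: vadd (vadd a b) (vsub a b) = vscal 2 a).
  { unfold vsub. rewrite vadd_assoc, <- (vadd_assoc X a b a), (vadd_comm X b a), vadd_assoc,
      <- (vadd_assoc X (vadd a a) b (vopp b)), vadd_opp, vadd_0.
    replace 2 with (1+1) by ring. rewrite vscal_distr_r, vscal_1. reflexivity. }
  replace (2 * vnorm a) with (vnorm (vscal 2 a)).
  rewrite <- E. apply vnorm_triangle. rewrite vnorm_scal, Rabs_right; lra.
Qed.

End Vec.

Section Op.
Variables X Y : NormedSpace.
Variable T : X -> Y.
Hypothesis Tlin : linear_map T.
Hypothesis Tn : op_norm_is T 1.

Lemma T0 : T vzero = vzero.
Proof. rewrite <- (vscal0 X vzero), (proj2 Tlin), vscal0. reflexivity. Qed.

Lemma Tsub a b : T (vsub a b) = vsub (T a) (T b).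
Proof. unfold vsub. rewrite (proj1 Tlin), !vopp_scal, (proj2 Tlin). reflexivity. Qed.

Lemma Tle w : vnorm (T w) <= vnorm w.
Proof.
  destruct (Req_dec (vnorm w) 0) as [H|H].
  - apply vnorm_eq0 in H. subst. rewrite T0, (vnorm0 X), (vnorm0 Y). lra.
  - pose proof (vnorm_nonneg X w).
    assert (Hu: vnorm (T (vscal (/ vnorm w) w)) <= 1).
    { apply (proj1 Tn). exists (vscal (/ vnorm w) w). split; [|reflexivity].
      rewrite vnorm_scal, Rabs_right. field_simplify; lra.
      apply Rle_ge, Rlt_le, Rinv_0_lt_compat; lra. }
    rewrite (proj2 Tlin), vnorm_scal, Rabs_right in Hu.
    2: apply Rle_ge, Rlt_le, Rinv_0_lt_compat; lra.
    apply (Rmult_le_compat_l (vnorm w)) in Hu; [|lra].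
    rewrite <- Rmult_assoc, Rinv_r in Hu; lra.
Qed.

Hypothesis UC : uniformly_convex X.

Lemma uc_est delta : 0 < delta -> exists e, 0 < e /\
  forall x z, vnorm x <= 1 -> vnorm z <= 1 -> vnorm (T x) > 1 - e -> vnorm (T z) > 1 - e ->
    vnorm (vsub (T x) (T z)) < e -> vnorm (vsub x z) < delta.
Proof.
  intro Hd. destruct (UC delta Hd) as [d [Hd0 Hdd]].
  exists (d/2). split; [lra|]. intros x z Hx Hz Htx Htz Hxz.
  destruct (Rlt_or_le (vnorm (vsub x z)) delta) as [|Hge]; auto.
  specialize (Hdd x z Hx Hz Hge).
  pose proof (Tle (vscal (1/2) (vadd x z))) as H1.
  rewrite (proj2 Tlin), (proj1 Tlin), vnorm_scal, Rabs_right in H1 by lra.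
  pose proof (mid_bound Y (T x) (T z)). lra.
Qed.

Lemma open_ball (c : Y) (r : R) : Defs.open_set (fun z : Y => vnorm (vsub z c) < r).
Proof.
  intros y Hy. exists (r - vnorm (vsub y c)). split; [lra|].
  intros z Hz. pose proof (vsub_tri Y z y c). lra.
Qed.

Hypothesis Tc : compact_operator T.

Lemma finite_cover r : 0 < r -> exists l : list Y, forall x, vnorm x <= 1 ->
  exists i, In i l /\ vnorm (vsub (T x) i) < r.
Proof.
  intro Hr. destruct Tc as [_ Hk].
  destruct (Hk Y (fun c z => vnorm (vsub z c) < r)) as [l Hl].
  - intro c. apply open_ball.
  - intros y _. exists y. rewrite vsub_self, vnorm0. exact Hr.
  - exists l. intros x Hx. apply Hl. intros s Hs. exists (T x). split.
    exists x; auto. rewrite vsub_self, vnorm0. exact Hs.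
Qed.

Definition rich r (i : Y) := forall rho, 0 < rho -> exists z, vnorm z = 1 /\
  vnorm (T z) > 1 - rho /\ vnorm (vsub (T z) i) < r.

Lemma rich_split r (l : list Y) : exists e, 0 < e /\ forall i, In i l -> rich r i \/
  (forall z, vnorm z = 1 -> vnorm (vsub (T z) i) < r -> vnorm (T z) <= 1 - e).
Proof.
  induction l as [|a l [e1 [He1 IH]]].
  - exists 1. split; [lra|]. intros i [].
  - destruct (classic (rich r a)) as [Ha|Ha].
    + exists e1. split; auto. intros i [<-|Hi]; auto.
    + unfold rich in Ha. apply not_all_ex_not in Ha. destruct Ha as [rho Hrho].
      apply imply_to_and in Hrho. destruct Hrho as [Hr0 Hne].
      exists (Rmin e1 rho). split. apply Rmin_pos; auto.
      intros i [<-|Hi].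
      * right. intros z Hz Hzi. destruct (Rle_or_lt (vnorm (T z)) (1 - rho)) as [|Hlt].
        pose proof (Rmin_r e1 rho). lra.
        exfalso. apply Hne. exists z. auto.
      * destruct (IH i Hi) as [|H]; auto. right. intros z Hz Hzi.
        pose proof (H z Hz Hzi). pose proof (Rmin_l e1 rho). lra.
Qed.

Lemma lemA delta : 0 < delta -> exists e, 0 < e /\ forall x, vnorm x = 1 -> vnorm (T x) > 1 - e ->
  forall rho, 0 < rho -> exists z, vnorm z = 1 /\ vnorm (T z) > 1 - rho /\ vnorm (vsub z x) < delta.
Proof.
  intro Hd. destruct (uc_est delta Hd) as [e0 [He0 Hu]].
  destruct (finite_cover (e0/2)) as [l Hl]; [lra|].
  destruct (rich_split (e0/2) l) as [e1 [He1 Hs]].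
  exists (Rmin e0 e1). split. apply Rmin_pos; auto.
  intros x Hx Htx rho Hrho. pose proof (Rmin_l e0 e1). pose proof (Rmin_r e0 e1).
  destruct (Hl x (Req_le _ _ Hx)) as [i [Hi Hxi]].
  destruct (Hs i Hi) as [Hr|Hn].
  - destruct (Hr (Rmin rho e0)) as [z [Hz [Htz Hzi]]]. apply Rmin_pos; auto.
    pose proof (Rmin_l rho e0). pose proof (Rmin_r rho e0).
    exists z. split; auto. split. lra.
    apply Hu; try lra.
    pose proof (vsub_tri Y (T z) i (T x)). rewrite (vsub_sym Y i (T x)) in H3. lra.
  - specialize (Hn x Hx Hxi). lra.
Qed.

End Op.

Lemma half_pos n : 0 < (1/2)^n.
Proof. apply pow_lt; lra. Qed.

Lemma half_small y : 0 < y -> exists N, forall n, (n >= N)%nat -> (1/2)^n < y.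
Proof.
  intro Hy. destruct (pow_lt_1_zero (1/2)) with (y := y) as [N HN]; auto.
  rewrite Rabs_right; lra.
  exists N. intros n Hn. specialize (HN n Hn). rewrite Rabs_right in HN; auto.
  apply Rle_ge, Rlt_le, half_pos.
Qed.

Theorem mainTheorem2 (X Y : NormedSpace) :
  Banach X -> uniformly_convex X -> Banach Y ->
  forall eps, 0 < eps ->
  forall T : X -> Y, compact_operator T -> op_norm_is T 1 ->
  exists eta, 0 < eta /\
    forall x0 : X, vnorm x0 = 1 -> vnorm (T x0) > 1 - eta ->
      exists x1 : X, vnorm x1 = 1 /\ vnorm (T x1) = 1 /\ vnorm (vsub x1 x0) < eps.
Proof.
  intros HX UC HY eps Heps T Tc Tn.
  assert (Tlin : linear_map T) by exact (proj1 (proj1 Tc)).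
  set (d := fun k : nat => eps / 4 * (1/2)^k).
  assert (Hdpos : forall k, 0 < d k).
  { intro k. unfold d. pose proof (half_pos k). apply Rmult_lt_0_compat; lra. }
  assert (HA : forall k, {e | 0 < e /\ e <= d k /\ forall x, vnorm x = 1 -> vnorm (T x) > 1 - e ->
     forall rho, 0 < rho -> exists z, vnorm z = 1 /\ vnorm (T z) > 1 - rho /\ vnorm (vsub z x) < d k}).
  { intro k. apply constructive_indefinite_description.
    destruct (lemA X Y T Tlin Tn UC Tc (d k) (Hdpos k)) as [e [He Hp]].
    exists (Rmin e (d k)). split. apply Rmin_pos; auto. split. apply Rmin_r.
    intros x Hx Htx. apply Hp; auto. pose proof (Rmin_l e (d k)). lra. }
  set (e := fun k => proj1_sig (HA k)).
  set (P := fun k x => vnorm x = 1 /\ vnorm (T x) > 1 - e k).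
  assert (step : forall k x, P k x -> {z | P (S k) z /\ vnorm (vsub z x) < d k}).
  { intros k x [Hx Htx]. apply constructive_indefinite_description.
    destruct (proj2_sig (HA k)) as [_ [_ Hp]].
    destruct (Hp x Hx Htx (e (S k))) as [z [Hz [Htz Hzx]]].
    exact (proj1 (proj2_sig (HA (S k)))).
    exists z. repeat split; auto. }
  exists (e 0%nat). split. exact (proj1 (proj2_sig (HA 0%nat))).
  intros x0 H0 H1.
  set (s := nat_rect (fun k => {x | P k x}) (exist _ x0 (conj H0 H1))
     (fun k sk => exist _ (proj1_sig (step k (proj1_sig sk) (proj2_sig sk)))
                          (proj1 (proj2_sig (step k (proj1_sig sk) (proj2_sig sk)))))).
  set (xs := fun k => proj1_sig (s k)).
  assert (HP : forall k, P k (xs k)) by (intro k; exact (proj2_sig (s k))).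
  assert (Hst : forall k, vnorm (vsub (xs (S k)) (xs k)) < d k).
  { intro k. unfold xs. simpl. exact (proj2 (proj2_sig (step k _ _))). }
  assert (Hx0 : xs 0%nat = x0) by reflexivity.
  assert (Hdist : forall m j, vnorm (vsub (xs (m+j)%nat) (xs m)) <= eps/2 * (1/2)^m * (1 - (1/2)^j)).
  { intros m j. induction j as [|j IH].
    - rewrite Nat.add_0_r, vsub_self, vnorm0. simpl. lra.
    - rewrite Nat.add_succ_r. pose proof (vsub_tri X (xs (S (m+j))) (xs (m+j)%nat) (xs m)).
      pose proof (Hst (m+j)%nat). unfold d in H2. rewrite pow_add in H2.
      simpl pow at 2.
      set (a := (1/2)^m) in *. set (h := (1/2)^j) in *.
      assert (E: eps/2*a*(1-(1/2*h)) = eps/2*a*(1-h) + eps/4*a*h) by field.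
      rewrite E. replace (eps/4*(a*h)) with (eps/4*a*h) in H2 by ring. lra. }
  assert (Hb : forall m n, (m <= n)%nat -> vnorm (vsub (xs n) (xs m)) <= eps/2 * (1/2)^m).
  { intros m n Hmn. replace n with (m + (n-m))%nat by lia.
    pose proof (Hdist m (n-m)%nat). pose proof (half_pos m). pose proof (half_pos (n-m)).
    assert (eps/2*(1/2)^m*(1-(1/2)^(n-m)) <= eps/2*(1/2)^m).
    { assert (0 <= eps/2*(1/2)^m*(1/2)^(n-m)).
      { apply Rmult_le_pos; [apply Rmult_le_pos|]; lra. }
      assert (E: eps/2*(1/2)^m*(1-(1/2)^(n-m)) = eps/2*(1/2)^m - eps/2*(1/2)^m*(1/2)^(n-m)) by ring.
      lra. }
    lra. }
  destruct (HX xs) as [l Hl].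
  { intros r Hr. destruct (half_small (r/eps)) as [N HN].
    { apply Rdiv_lt_0_compat; lra. }
    exists N. intros m n Hm Hn.
    pose proof (vsub_tri X (xs m) (xs N) (xs n)).
    pose proof (Hb N m Hm). pose proof (Hb N n Hn). rewrite vsub_sym in H3.
    specialize (HN N (le_n N)).
    assert (eps * (1/2)^N < r).
    { apply (Rmult_lt_compat_l eps) in HN; auto. replace (eps*(r/eps)) with r in HN by (field; lra). lra. }
    lra. }
  assert (Hz : forall a, (forall r, 0 < r -> Rabs a < r) -> a = 0).
  { intros a Ha. destruct (Req_dec a 0) as [|Hne]; auto.
    specialize (Ha (Rabs a) (Rabs_pos_lt a Hne)). lra. }
  assert (Hl1 : vnorm l = 1).
  { assert (vnorm l - 1 = 0); [|lra]. apply Hz. intros r Hr.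
    destruct (Hl r Hr) as [N HN]. specialize (HN N (le_n N)).
    destruct (HP N) as [HxN _].
    pose proof (vnorm_rev X (xs N) l) as A1. pose proof (vnorm_rev X l (xs N)) as A2.
    rewrite vsub_sym in A2. apply Rabs_def1; lra. }
  exists l. split; [exact Hl1|]. split.
  - apply Rle_antisym.
    + rewrite <- Hl1. apply (Tle X Y T Tlin Tn).
    + destruct (Rle_or_lt 1 (vnorm (T l))) as [|Hlt]; auto. exfalso.
      set (r := 1 - vnorm (T l)).
      assert (Hr : 0 < r) by (unfold r; lra).
      destruct (Hl (r/2)) as [N1 HN1]; [lra|].
      destruct (half_small (r/eps)) as [N2 HN2]; [apply Rdiv_lt_0_compat; lra|].
      set (n := Nat.max N1 N2).
      specialize (HN1 n (Nat.le_max_l _ _)). specialize (HN2 n (Nat.le_max_r _ _)).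
      destruct (HP n) as [_ Htn].
      pose proof (proj2_sig (HA n)) as [_ [Hed _]]. fold (e n) in Hed. unfold d in Hed.
      assert (eps/4*(1/2)^n < r/2).
      { apply (Rmult_lt_compat_l (eps/4)) in HN2; [|lra].
        replace (eps/4*(r/eps)) with (r/4) in HN2 by (field; lra). lra. }
      pose proof (vnorm_rev Y (T (xs n)) (T l)) as A3.
      rewrite <- (Tsub X Y T Tlin) in A3. pose proof (Tle X Y T Tlin Tn (vsub (xs n) l)).
      unfold r in *. lra.
  - destruct (Hl (eps/2)) as [N HN]; [lra|]. specialize (HN N (le_n N)).
    pose proof (Hb 0%nat N (Nat.le_0_l N)) as A4. rewrite Hx0 in A4. simpl pow in A4.
    pose proof (vsub_tri X l (xs N) x0). rewrite vsub_sym in HN. lra.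
Qed.
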